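(* Let $A$ be a finite-dimensional semisimple associative algebra over $\mathbb{C}$, $G$ a finite group of automorphisms of $A$, and $M$ a finite-dimensional simple $A$-module with inertia subgroup $G_M$, isomorphisms $\phi(h)$ and 2-cocycle $\alpha_M$ as in the context. Then for every $\gamma\in J_{M,\alpha_M}$, the multiplicity space $M_\gamma$ is a simple $A^G$-module.
   Context: For an $A$-module $M$ and $h\in G$, ${}^hM$ denotes $M$ with $A$-action $a*_hm=h^{-1}(a)m$. The inertia subgroup is $G_M=\{h\in G: {}^hM\cong M \text{ as } A\text{-modules}\}$. For each $h\in G_M$ fix a linear bijection $\phi(h)$ of $M$ with $\phi(h)a=h(a)\phi(h)$ for all $a\in A$, $\phi(1)=1_M$; then $\phi(h)\phi(k)=\alpha_M(h,k)\phi(hk)$ for a 2-cocycle $\alpha_M$ (values roots of unity). $\mathbb{C}^{\alpha_M}[G_M]$ is the twisted group algebra with basis $\bar h$ and $\bar h\bar k=\alpha_M(h,k)\overline{hk}$; $M$ is a $\mathbb{C}^{\alpha_M}[G_M]$-module via $\bar h\mapsto\phi(h)$. $J_{M,\alpha_M}$ is the set of irreducible characters $\lambda$ of $\mathbb{C}^{\alpha_M}[G_M]$ whose simple module $W_\lambda$ occurs in $M$. Fixing a nonzero $w\in W_\lambda$, $M_\lambda=\{f(w): f\in\mathrm{Hom}_{\mathbb{C}^{\alpha_M}[G_M]}(W_\lambda,M)\}\subseteq M$, which is stable under $A^G=\{a\in A: g(a)=a\ \forall g\in G\}$. *)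

(* Defs.v *)
From HB Require Import structures.
From mathcomp Require Import all_boot all_order all_algebra all_fingroup all_field.
From mathcomp Require Export complex.
From mathcomp Require Export reals.
Set Implicit Arguments. Unset Strict Implicit. Unset Printing Implicit Defensive.
Import GRing.Theory.
Local Open Scope ring_scope.

Section Defs.
Variable C : fieldType.

Definition left_ideal (A : falgType C) (L : {vspace A}) : Prop :=
  forall a x : A, x \in L -> a * x \in L.

Definition semisimple_algebra (A : falgType C) : Prop :=
  forall L : {vspace A}, left_ideal L ->
    exists L' : {vspace A},
      [/\ left_ideal L', (L + L')%VS = fullv & (L :&: L')%VS = 0%VS].

Definition alg_automorphism (A : falgType C) (f : A -> A) : Prop :=
  [/\ forall (k : C) (a b : A), f (k *: a + b) = k *: f a + f b,
      f 1 = 1,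
      forall a b : A, f (a * b) = f a * f b
    & bijective f].

Definition aut_group_action (A : falgType C) (gT : finGroupType)
    (G : {group gT}) (sigma : gT -> A -> A) : Prop :=
  [/\ forall g, g \in G -> alg_automorphism (sigma g),
      forall g h a, g \in G -> h \in G -> sigma (g * h)%g a = sigma g (sigma h a)
    & forall g h, g \in G -> h \in G -> sigma g =1 sigma h -> g = h].

Definition invariant (A : falgType C) (gT : finGroupType) (G : {group gT})
    (sigma : gT -> A -> A) (a : A) : Prop :=
  forall g, g \in G -> sigma g a = a.

Definition is_module (A : falgType C) (M : vectType C) (act : A -> 'End(M)) : Prop :=
  [/\ forall (k : C) (a b : A), act (k *: a + b) = k *: act a + act b,
      act 1 = \1%VF
    & forall a b : A, act (a * b) = (act a \o act b)%VF].

Definition simple_module (A : falgType C) (M : vectType C) (act : A -> 'End(M)) : Prop :=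
  (0 < \dim (fullv : {vspace M}))%N /\
  forall U : {vspace M}, (forall a u, u \in U -> act a u \in U) ->
    U = 0%VS \/ U = fullv.

(* h is in the inertia subgroup G_M: h \in G and  ^hM ~= M  as A-modules,
   where ^hM is M with action  a *_h m = h^{-1}(a) m. *)
Definition in_inertia (A : falgType C) (gT : finGroupType) (G : {group gT})
    (sigma : gT -> A -> A) (M : vectType C) (act : A -> 'End(M)) (h : gT) : Prop :=
  h \in G /\
  exists f : 'End(M), bijective f /\
    forall (a : A) (m : M), f (act (sigma h^-1%g a) m) = act a (f m).

(* A (unital) module over C^alpha[G_M] on W: the basis element \bar h acts by
   psi h, for h in the subgroup described by the predicate GM. *)
Definition twisted_module (gT : finGroupType) (GM : gT -> Prop)
    (alpha : gT -> gT -> C) (W : vectType C) (psi : gT -> 'End(W)) : Prop :=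
  psi 1%g = \1%VF /\
  forall h k, GM h -> GM k -> (psi h \o psi k)%VF = alpha h k *: psi (h * k)%g.

Definition twisted_simple (gT : finGroupType) (GM : gT -> Prop)
    (W : vectType C) (psi : gT -> 'End(W)) : Prop :=
  (0 < \dim (fullv : {vspace W}))%N /\
  forall U : {vspace W}, (forall h u, GM h -> u \in U -> psi h u \in U) ->
    U = 0%VS \/ U = fullv.

Definition twisted_hom (gT : finGroupType) (GM : gT -> Prop)
    (W M : vectType C) (psi : gT -> 'End(W)) (phi : gT -> 'End(M))
    (f : 'Hom(W, M)) : Prop :=
  forall h (x : W), GM h -> f (psi h x) = phi h (f x).

(* M_lambda = { f(w) : f in Hom_{C^alpha[G_M]}(W_lambda, M) }. *)
Definition mult_space (gT : finGroupType) (GM : gT -> Prop)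
    (W M : vectType C) (psi : gT -> 'End(W)) (phi : gT -> 'End(M))
    (w : W) (m : M) : Prop :=
  exists f : 'Hom(W, M), twisted_hom GM psi phi f /\ f w = m.

Definition simple_invariant_submodule (A : falgType C) (gT : finGroupType)
    (G : {group gT}) (sigma : gT -> A -> A) (M : vectType C)
    (act : A -> 'End(M)) (P : M -> Prop) : Prop :=
  [/\ exists m, P m /\ m != 0,
      forall (k : C) (x y : M), P x -> P y -> P (k *: x + y),
      forall (a : A) (x : M), invariant G sigma a -> P x -> P (act a x)
    & forall U : {vspace M},
        (forall u, u \in U -> P u) ->
        (forall (a : A) u, invariant G sigma a -> u \in U -> act a u \in U) ->
        U = 0%VS \/ (forall m, P m -> m \in U)].

End Defs.

(* Main.v *)
Require Import Defs.
From HB Require Import structures.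
From mathcomp Require Import all_boot all_order all_algebra all_fingroup all_field.
From mathcomp Require Import complex reals zify.
From Stdlib Require Import Classical_Prop.
Import GRing.Theory.
Local Open Scope ring_scope.

Lemma linfunE' (K : fieldType) (aT rT : vectType K) (f : aT -> rT)
  (Hf : forall k x y, f (k *: x + y) = k *: f x + f y) : linfun f =1 f.
Proof.
pose fL : {linear aT -> rT} := HB.pack f (GRing.isLinear.Build _ _ _ _ f Hf).
exact: (lfunE fL).
Qed.

Lemma eigen_sub (C : numClosedFieldType) (V : vectType C) (S : 'End(V))
  (U : {vspace V}) : U != 0%VS -> (S @: U <= U)%VS ->
  exists v (l : C), [/\ v \in U, v != 0 & S v = l *: v].
Proof.
move=> U0 SU.
have SUin : forall u, u \in U -> S u \in U.
  by move=> u uU; apply: (subvP SU); apply: memv_img.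
pose Sr : 'End(subvs_of U) := linfun (fun x => vsproj U (S (vsval x))).
have SrE : forall x, Sr x = vsproj U (S (vsval x)).
  by apply: linfunE' => k x y; rewrite !linearP.
pose e := vbasis (fullv : {vspace subvs_of U}).
have eb : basis_of fullv e := vbasisP _.
have n0 : (0 < \dim (fullv : {vspace subvs_of U}))%N.
  rewrite lt0n dimv_eq0; apply/eqP => F0.
  have : vsproj U (vpick U) \in (fullv : {vspace subvs_of U}) by rewrite memvf.
  rewrite F0 memv0 => /eqP/(congr1 vsval).
  by rewrite vsprojK ?memv_pick // linear0 => /eqP; rewrite vpick0 (negbTE U0).
have [a Ha] := eigenvalue_closed (passmx.mxof e e Sr) n0.
have : passmx.leigenspace Sr a != 0%VS.
  by rewrite (passmx.leigenspaceE eb) passmx.vsof_eq0.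
rewrite -vpick0 => nz.
set x := vpick _ in nz.
have xk : x \in passmx.leigenspace Sr a by apply: memv_pick.
rewrite /passmx.leigenspace memv_ker !lfunE /= !lfunE /= subr_eq0 in xk.
rewrite SrE in xk.
exists (vsval x), a; split.
- exact: subvsP.
- apply: contra nz => /eqP h; apply/eqP; apply: subvs_inj; by rewrite h linear0.
- rewrite -(vsprojK (SUin _ (subvsP x))) (eqP xk) scale_lfunE id_lfunE. have := vsval_is_linear a x 0. rewrite addr0 linear0 addr0. exact.
Qed.

Section Dummy. End Dummy.

Lemma orbitB {K : fieldType} {V : vectType K} (B : {vspace 'End(V)}) :
  \1%VF \in B -> (forall f g, f \in B -> g \in B -> (f \o g)%VF \in B) ->
  (forall U : {vspace V}, (forall f u, f \in B -> u \in U -> f u \in U) ->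
     U = 0%VS \/ U = fullv) ->
  forall v, v != 0 -> forall x, exists2 b, b \in B & b v = x.
Proof.
move=> B1 BM Birr v v0 x.
pose ev : 'Hom('End(V), V) := linfun (fun b : 'End(V) => b v).
have evE : forall b, ev b = b v.
  by apply: linfunE' => k b1 b2; rewrite add_lfunE scale_lfunE.
have : (x \in (ev @: B)%VS).
  have st : forall f u, f \in B -> u \in (ev @: B)%VS -> f u \in (ev @: B)%VS.
    move=> f u fB /memv_imgP[b bB ->]; rewrite evE -comp_lfunE -evE.
    by apply: memv_img; apply: (BM).
  have [U0|->] := Birr (ev @: B)%VS st; last by rewrite memvf.
  have : v \in (ev @: B)%VS by rewrite -(id_lfunE v) -evE memv_img.
  by rewrite U0 memv0 (negbTE v0).
by case/memv_imgP => b bB ->; exists b; rewrite ?evE.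
Qed.

Lemma rank_descent {C : numClosedFieldType} {V : vectType C} (B : {vspace 'End(V)}) :
  \1%VF \in B -> (forall f g, f \in B -> g \in B -> (f \o g)%VF \in B) ->
  (forall U : {vspace V}, (forall f u, f \in B -> u \in U -> f u \in U) ->
     U = 0%VS \/ U = fullv) ->
  forall T, T \in B -> (1 < \dim (limg T))%N ->
  exists2 T', T' \in B & (T' != 0) && (\dim (limg T') < \dim (limg T))%N.
Proof.
move=> B1 BM Birr T TB dT.
have lT0 : limg T != 0%VS by rewrite -dimv_eq0 -lt0n (ltn_trans _ dT).
have [x1 _ Tx1] : exists2 x1, x1 \in (fullv : {vspace V}) & vpick (limg T) = T x1.
  by apply/memv_imgP; apply: memv_pick.
have Tx10 : T x1 != 0 by rewrite -Tx1 vpick0.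
have : ~~ (limg T <= <[T x1]>)%VS.
  apply/negP => /dimvS; rewrite dim_vline Tx10 => h.
  by move: (leq_ltn_trans h dT); rewrite ltnn.
case/subvPn => y /memv_imgP[x2 _ ->] Tx2.
have [b bB bx] := @orbitB _ _ B B1 BM Birr _ Tx10 x2.
pose S := (T \o b)%VF.
have SU : (S @: limg T <= limg T)%VS.
  apply/subvP => z /memv_imgP[z' _ ->]; rewrite comp_lfunE; exact: memv_img (memvf _).
have [v [l [vT v0 Sv]]] := @eigen_sub _ _ S _ lT0 SU.
pose D := (S - l *: \1)%VF.
exists (D \o T)%VF.
  apply: (BM) => //; apply: memvB; first exact: (BM).
  exact: memvZ.
apply/andP; split.
  apply/lfunPn; exists x1; rewrite zero_lfunE comp_lfunE /D add_lfunE opp_lfunE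
    scale_lfunE id_lfunE comp_lfunE bx subr_eq0.
  by apply: contra Tx2 => /eqP ->; rewrite memvZ // memv_line.
rewrite limg_comp.
have := limg_ker_dim D (limg T).
have : (0 < \dim (limg T :&: lker D))%N.
  rewrite lt0n dimv_eq0; apply/eqP => h.
  have : v \in (limg T :&: lker D)%VS.
    rewrite memv_cap vT memv_ker /D add_lfunE opp_lfunE scale_lfunE id_lfunE Sv.
    by rewrite subrr eqxx.
  by rewrite h memv0 (negbTE v0).
move=> h1 h2; by rewrite -h2 -[X in (X < _)%N]add0n ltn_add2r.
Qed.

Lemma rank_one {C : numClosedFieldType} {V : vectType C} (B : {vspace 'End(V)}) :
  \1%VF \in B -> (forall f g, f \in B -> g \in B -> (f \o g)%VF \in B) ->
  (forall U : {vspace V}, (forall f u, f \in B -> u \in U -> f u \in U) ->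
     U = 0%VS \/ U = fullv) ->
  forall T, T \in B -> T != 0 -> exists2 E, E \in B & \dim (limg E) = 1%N.
Proof.
move=> B1 BM Birr T TB T0.
have [n] := ubnP (\dim (limg T)); elim: n T TB T0 => // n IH T TB T0 dT.
have dT0 : (0 < \dim (limg T))%N.
  case/lfunPn: T0 => x; rewrite zero_lfunE => Tx.
  rewrite lt0n dimv_eq0; apply: contra Tx => /eqP h.
  by have := memv_img T (memvf x); rewrite h memv0.
case: (ltngtP (\dim (limg T)) 1) => [|h|h].
- by rewrite ltnNge dT0.
- have [T' T'B /andP[T'0 dT']] := @rank_descent _ _ B B1 BM Birr _ TB h.
  apply: (IH T') => //; exact: (leq_trans dT').
- by exists T.
Qed.

Lemma burnside {C : numClosedFieldType} {V : vectType C} (B : {vspace 'End(V)}) :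
  (0 < \dim (fullv : {vspace V}))%N ->
  \1%VF \in B -> (forall f g, f \in B -> g \in B -> (f \o g)%VF \in B) ->
  (forall U : {vspace V}, (forall f u, f \in B -> u \in U -> f u \in U) ->
     U = 0%VS \/ U = fullv) ->
  forall T, T \in B.
Proof.
move=> dV B1 BM Birr.
have V0 : (\1%VF : 'End(V)) != 0.
  apply/lfunPn; exists (vpick fullv).
  by rewrite id_lfunE zero_lfunE vpick0 -dimv_eq0 -lt0n dV.
have [E EB dE] := @rank_one _ _ B B1 BM Birr _ B1 V0.
set u := vpick (limg E).
have u0 : u != 0 by rewrite vpick0 -dimv_eq0 dE.
have limgE : limg E = <[u]>%VS.
  apply/eqP; rewrite eq_sym eqEdim dim_vline u0 dE leqnn andbT -memvE.
  exact: memv_pick.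
have Eu : forall x, E x \in <[u]>%VS by move=> x; rewrite -limgE memv_img ?memvf.
pose c (y : V) := coord [tuple u] ord0 y.
have cE : forall y, y \in <[u]>%VS -> y = c y *: u.
  move=> y yu; rewrite {1}(coord_span (X:=[tuple u]) (v:=y)) ?big_ord1 //.
  by rewrite span_seq1.
have clin : forall k y z, c (k *: y + z) = k * c y + c z.
  by move=> k y z; rewrite /c linearP.
have c0 : c 0 = 0 by rewrite /c linear0.
pose cmp := linfun (fun b : 'End(V) => (E \o b)%VF).
have cmpE : forall b, cmp b = (E \o b)%VF.
  by apply: linfunE' => k b1 b2; rewrite comp_lfunDr comp_lfunZr.
pose Q := (cmp @: B)%VS.
have QB : forall T, T \in Q -> exists2 b, b \in B & T = (E \o b)%VF.
  by move=> T /memv_imgP[b bB ->]; exists b; rewrite ?cmpE.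
have EQ : E \in Q by rewrite -[E]comp_lfun1r -cmpE memv_img.
have QLu : forall T, T \in Q -> forall x, T x \in <[u]>%VS.
  by move=> T /QB[b _ ->] x; rewrite comp_lfunE Eu.
pose k := \dim Q; pose tq := vbasis Q.
have tqQ : forall i : 'I_k, tq`_i \in Q.
  by move=> i; apply: vbasis_mem; apply: mem_nth; rewrite size_tuple.
pose ka := linfun (fun x : V => \row_(i < k) c (tq`_i x)).
have kaE : forall x, ka x = \row_(i < k) c (tq`_i x).
  by apply: linfunE' => a y z; apply/rowP => i; rewrite !mxE linearP clin.
have Qx0 : forall x, ka x = 0 -> forall T, T \in Q -> T x = 0.
  move=> x kx T TQ; rewrite (coord_vbasis TQ) sum_lfunE big1 // => i _.
  rewrite scale_lfunE (cE _ (QLu _ (tqQ i) x)).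
  have := congr1 (fun m : 'rV[C]_k => m 0 i) kx; rewrite kaE !mxE => ->.
  by rewrite scale0r scaler0.
have E0 : E != 0.
  apply/eqP => h; move: dE; rewrite h.
  suff -> : limg (0 : 'End(V)) = 0%VS by rewrite dimv0.
  by apply/eqP; rewrite -subv0; apply/subvP => y /memv_imgP[x _ ->]; rewrite zero_lfunE mem0v.
have ker0 : lker ka = 0%VS.
  have st : forall f y, f \in B -> y \in lker ka -> f y \in lker ka.
    move=> f y fB; rewrite !memv_ker => /eqP ky; apply/eqP/rowP => i.
    rewrite kaE !mxE.
    have [b bB ->] := QB _ (tqQ i).
    rewrite comp_lfunE -(comp_lfunE b f) -comp_lfunE (Qx0 y ky) ?c0 //.
    by rewrite -cmpE memv_img // BM.
  case: (Birr _ st) => // full.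
  case/lfunPn: E0 => x0; rewrite zero_lfunE => Ex0.
  have : x0 \in lker ka by rewrite full memvf.
  by rewrite memv_ker => /eqP/Qx0/(_ E EQ) h; rewrite h eqxx in Ex0.
have dimQ : (\dim (fullv : {vspace V}) <= k)%N.
  have <- : \dim (ka @: fullv) = \dim (fullv : {vspace V}).
    by apply: limg_dim_eq; rewrite ker0 capv0.
  apply: leq_trans (dimvS (subvf (ka @: fullv))) _.
  by rewrite dimvf /dim /= mul1n.
pose n := \dim (fullv : {vspace V}); pose ev := vbasis (fullv : {vspace V}).
pose mu := linfun (fun T : 'End(V) => \row_(j < n) c (T ev`_j)).
have muE : forall T, mu T = \row_(j < n) c (T ev`_j).
  by apply: linfunE' => a T1 T2; apply/rowP => j; rewrite !mxE add_lfunE scale_lfunE clin.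
have Lu0 : forall T : 'End(V), (forall x, T x \in <[u]>%VS) -> mu T = 0 -> T = 0.
  move=> T LT mT; apply/lfunP => x.
  rewrite zero_lfunE (coord_vbasis (memvf x)) linear_sum big1 // => j _.
  rewrite linearZ /= (cE _ (LT _)).
  have := congr1 (fun m : 'rV[C]_n => m 0 j) mT; rewrite muE !mxE => ->.
  by rewrite scale0r scaler0.
have Qfull : (mu @: Q)%VS = fullv.
  have dQ : \dim (mu @: Q) = k.
    apply: limg_dim_eq; apply/eqP; rewrite -subv0; apply/subvP => T.
    rewrite memv_cap memv_ker => /andP[TQ /eqP mT].
    by rewrite (Lu0 T (QLu T TQ) mT) mem0v.
  apply/eqP; rewrite eqEdim subvf dQ.
  have -> : \dim (fullv : {vspace 'rV[C]_n}) = n by rewrite dimvf /dim /= mul1n.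
  exact: dimQ.
have LuB : forall R : 'End(V), (forall x, R x \in <[u]>%VS) -> R \in B.
  move=> R LR.
  have : mu R \in (mu @: Q)%VS by rewrite Qfull memvf.
  case/memv_imgP => T TQ eq.
  have : R - T = 0.
    apply: Lu0; last by rewrite linearB /=; apply/eqP; rewrite subr_eq0; apply/eqP.
    by move=> x; rewrite add_lfunE opp_lfunE memvB // QLu.
  move/eqP; rewrite subr_eq0 => /eqP ->.
  by have [b bB ->] := QB _ TQ; apply: BM.
move=> T.
have : forall j : 'I_n, exists b, (b \in B) && (b u == ev`_j).
  move=> j; have [b bB bu] := @orbitB _ _ B B1 BM Birr _ u0 ev`_j.
  by exists b; rewrite bB bu eqxx.
case/fin_all_exists => bj Hbj.
pose R (j : 'I_n) := linfun (fun x : V => coord ev j (T x) *: u).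
have RE : forall j x, R j x = coord ev j (T x) *: u.
  move=> j; apply: linfunE' => a y z.
  by rewrite linearP /= linearP scalerDl scalerA.
have -> : T = \sum_(j < n) (bj j \o R j)%VF.
  apply/lfunP => x; rewrite sum_lfunE {1}(coord_vbasis (memvf (T x))).
  apply: eq_bigr => j _; rewrite comp_lfunE RE linearZ /=.
  by case/andP: (Hbj j) => _ /eqP ->.
apply: memv_suml => j _; apply: BM; first by case/andP: (Hbj j).
by apply: LuB => x; rewrite RE memvZ // memv_line.
Qed.

Lemma ideal_one {K : fieldType} {V : vectType K} (X : 'End(V)) : X != 0 ->
  exists n (R S : 'I_n -> 'End(V)), \sum_(i < n) (R i \o X \o S i)%VF = \1%VF.
Proof.
case/lfunPn => x; rewrite zero_lfunE => y0.
set y := X x in y0.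
pose ev := vbasis (fullv : {vspace V}).
case: (boolP [exists i, coord ev i y != 0]) => [/existsP[i0 ci0] | /existsPn h]; last first.
  move: y0; rewrite (coord_vbasis (memvf y)) big1 ?eqxx // => i _.
  by move/negPn/eqP: (h i) => ->; rewrite scale0r.
pose l z := coord ev i0 z / coord ev i0 y.
pose S (j : 'I_(\dim (fullv : {vspace V}))) := linfun (fun z : V => coord ev j z *: x).
pose R (j : 'I_(\dim (fullv : {vspace V}))) := linfun (fun z : V => l z *: ev`_j).
have SE : forall j z, S j z = coord ev j z *: x.
  by move=> j; apply: linfunE' => a z1 z2; rewrite linearP scalerDl scalerA.
have RE : forall j z, R j z = l z *: ev`_j.
  move=> j; apply: linfunE' => a z1 z2.
  by rewrite /l linearP /= mulrDl -mulrA scalerDl scalerA.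
exists (\dim (fullv : {vspace V})), R, S.
apply/lfunP => z; rewrite sum_lfunE id_lfunE {2}(coord_vbasis (memvf z)).
apply: eq_bigr => j _; rewrite !comp_lfunE SE linearZ /= RE /l linearZ /=.
by rewrite -mulrA divff // mulr1.
Qed.

Lemma act_surj {K : numClosedFieldType} {A : falgType K} {M : vectType K}
  {act : A -> 'End(M)} : is_module act -> simple_module act ->
  forall T, exists a, act a = T.
Proof.
case=> alin act1 actM [dM Hs] T.
pose aL := linfun act.
have aLE : forall a, aL a = act a by apply: linfunE'.
have : T \in limg aL.
  apply: burnside => //.
  - by rewrite -act1 -aLE memv_img ?memvf.
  - move=> f g /memv_imgP[a _ ->] /memv_imgP[b _ ->].
    by rewrite !aLE -actM -aLE memv_img ?memvf.
  - move=> U st; apply: Hs => a u uU; apply: st => //.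
    by rewrite -aLE memv_img ?memvf.
by case/memv_imgP => a _ ->; exists a; rewrite aLE.
Qed.

Lemma kill_lemma {K : numClosedFieldType} (A : falgType K) (M : vectType K)
  (act : A -> 'End(M)) (s t : A -> A) :
  is_module act -> simple_module act ->
  (forall k a b, s (k *: a + b) = k *: s a + s b) ->
  (forall a b, s (a * b) = s a * s b) ->
  (forall a, s (t a) = a) -> (forall a, t (s a) = a) ->
  (exists j, act j = \1%VF /\ act (s j) = 0) \/
  (exists f : 'End(M), bijective f /\ forall a m, f (act (t a) m) = act a (f m)).
Proof.
move=> Hmod Hsim slin smul st ts.
have surj := act_surj Hmod Hsim.
case: (Hmod) => alin act1 actM; case: (Hsim) => dM Hs.
pose aL := linfun act.
have aLE : forall a, aL a = act a by apply: linfunE'.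
pose sL := linfun s.
have sLE : forall a, sL a = s a by apply: linfunE'.
have act0 : act 0 = 0 by rewrite -aLE linear0.
have actsum : forall n (F : 'I_n -> A), act (\sum_(i < n) F i) = \sum_(i < n) act (F i).
  by move=> n F; rewrite -aLE linear_sum; apply: eq_bigr => i _; exact: aLE.
have ssum : forall n (F : 'I_n -> A), s (\sum_(i < n) F i) = \sum_(i < n) s (F i).
  by move=> n F; rewrite -sLE linear_sum; apply: eq_bigr => i _; exact: sLE.
have actB : forall a b, act (a - b) = act a - act b.
  by move=> a b; rewrite -!aLE linearB.
have sB : forall a b, s (a - b) = s a - s b.
  by move=> a b; rewrite -!sLE linearB.
have surj' : forall T, exists a, act (s a) = T.
  by move=> T; have [a <-] := surj T; exists (t a); rewrite st.
have id0 : (\1%VF : 'End(M)) != 0.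
  apply/lfunPn; exists (vpick fullv).
  by rewrite id_lfunE zero_lfunE vpick0 -dimv_eq0 -lt0n dM.
have lift : forall (g : A -> 'End(M)), (forall T, exists a, g a = T) ->
    forall n (R : 'I_n -> 'End(M)), exists r : 'I_n -> A, forall i, g (r i) = R i.
  by move=> g gs n R; apply: (@fin_all_exists _ (fun _ => A) (fun i a => g a = R i)) => i; apply: gs.
case: (Classical_Prop.classic (exists k, act (s k) = 0 /\ act k != 0)).
  case=> k [sk0 k0]; left.
  have [n [R [S HRS]]] := ideal_one (act k) k0.
  have [r Hr] := lift act surj n R; have [q Hq] := lift act surj n S.
  exists (\sum_(i < n) (r i * k * q i)); split.
    rewrite actsum -HRS; apply: eq_bigr => i _.
    by rewrite !actM Hr Hq.
  rewrite ssum actsum big1 // => i _.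
  by rewrite !smul !actM sk0 comp_lfun0r comp_lfun0l.
move=> Hno; right.
have h2 : forall k, act (s k) = 0 -> act k = 0.
  move=> k sk; apply/eqP; apply: contraT => k0; case: Hno; by exists k; split.

have wd : forall a b, act (s a) = act (s b) -> act a = act b.
  move=> a b h; apply/eqP; rewrite -subr_eq0 -actB; apply/eqP; apply: h2.
  by rewrite sB actB h subrr.
have s1 : s 1 = 1 by rewrite -(mulr1 (s 1)) -{2}(st 1) -smul mul1r st.
pose e := vbasis (fullv : {vspace M}).
pose i0 : 'I_(\dim (fullv : {vspace M})) := Ordinal dM.
pose e0 := e`_i0.
have ce00 : coord e i0 e0 = 1.
  by rewrite coord_free ?eqxx // (basis_free (vbasisP _)).
pose Q (x : M) := linfun (fun z : M => coord e i0 z *: x).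
have QE : forall x z, Q x z = coord e i0 z *: x.
  by move=> x; apply: linfunE' => a z1 z2; rewrite linearP scalerDl scalerA.
pose QL := linfun Q : 'Hom(M, 'End(M)).
have QLE : forall x, QL x = Q x.
  apply: linfunE' => a x y; apply/lfunP => z.
  by rewrite add_lfunE scale_lfunE !QE scalerDr !scalerA mulrC.
pose P := Q e0.
have PP : (P \o P)%VF = P.
  by apply/lfunP => z; rewrite comp_lfunE !QE linearZ /= ce00 mulr1.
have Pe0 : P e0 = e0 by rewrite QE ce00 scale1r.
have e00 : e0 != 0.
  by apply/eqP => h; move: ce00; rewrite h linear0 => /eqP; rewrite eq_sym oner_eq0.
have P0 : P != 0 by apply/lfunPn; exists e0; rewrite Pe0 zero_lfunE.
have [a0 Ha0] := surj' P.
have [n [R [S HRS]]] := ideal_one P P0.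
have [r Hr] := lift (fun a => act (s a)) surj' n R.
have [q Hq] := lift (fun a => act (s a)) surj' n S.
have jj : act (\sum_(i < n) (r i * a0 * q i)) = \1%VF.
  rewrite -act1; apply: wd; rewrite ssum actsum s1 act1 -HRS.
  by apply: eq_bigr => i _; rewrite !smul !actM Hr Hq Ha0.
have a00 : act a0 != 0.
  apply/eqP => h; move: jj; rewrite actsum big1 => [/esym/eqP|i _].
    by rewrite (negbTE id0).
  by rewrite !actM h comp_lfun0r comp_lfun0l.
case/lfunPn: a00 => m0; rewrite zero_lfunE => n00.
pose n0 := act a0 m0.
pose sAL := linfun (fun a => act (s a)).
have sALE : forall a, sAL a = act (s a).
  by apply: linfunE' => k a b; rewrite slin alin.
have limgs : limg sAL = fullv.
  apply/vspaceP => T; rewrite memvf; have [a <-] := surj' T.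
  by rewrite -sALE memv_img ?memvf.
pose cL := (sAL^-1)%VF.
have cLE : forall T, act (s (cL T)) = T.
  by move=> T; rewrite -sALE limg_lfunVK // limgs memvf.
pose Fm x := act (cL (Q x)) n0.
pose F := linfun Fm.
have FE : forall x, F x = Fm x.
  apply: linfunE' => k x y; rewrite /Fm -!QLE linearP /= linearP /= alin.
  by rewrite add_lfunE scale_lfunE.
have Feq : forall a m, F (act (s a) m) = act a (F m).
  move=> a m; rewrite !FE /Fm -comp_lfunE -actM.
  suff -> : act (cL (Q (act (s a) m))) = act (a * cL (Q m)) by [].
  apply: wd; rewrite cLE smul actM cLE.
  by apply/lfunP => z; rewrite comp_lfunE !QE linearZ.
have Fe0 : F e0 != 0.
  rewrite FE /Fm.
  have -> : act (cL (Q e0)) = act a0 by apply: wd; rewrite cLE Ha0.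
  have -> : act a0 n0 = n0.
    rewrite /n0 -comp_lfunE -actM.
    by have -> : act (a0 * a0) = act a0 by apply: wd; rewrite smul actM Ha0 PP.
  exact: n00.
have kF : lker F == 0%VS.
  have st' : forall a u, u \in lker F -> act a u \in lker F.
    move=> a u; rewrite !memv_ker => /eqP Fu.
    by rewrite -[a]st Feq Fu linear0.
  case: (Hs _ st') => [-> //|full].
  have : e0 \in lker F by rewrite full memvf.
  by rewrite memv_ker (negbTE Fe0).
exists (F^-1)%VF; split.
  by exists F; [exact: lker0_lfunVK kF | exact: lker0_lfunK kF].
move=> a m; apply: (lker0P kF); rewrite lker0_lfunVK //.
by have := Feq (t a) (F^-1%VF m); rewrite st lker0_lfunVK // => ->.
Qed.

Theorem theorem3p5
  (R : realType)
  (A : falgType R[i]) (HA : semisimple_algebra A)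
  (gT : finGroupType) (G : {group gT}) (sigma : gT -> A -> A)
  (HG : aut_group_action G sigma)
  (M : vectType R[i]) (act : A -> 'End(M))
  (Hmod : is_module act) (Hsimple : simple_module act)
  (phi : gT -> 'End(M))
  (Hphi : forall h, in_inertia G sigma act h ->
     bijective (phi h) /\
     forall (a : A) (m : M), phi h (act a m) = act (sigma h a) (phi h m))
  (Hphi1 : phi 1%g = \1%VF)
  (alpha : gT -> gT -> R[i])
  (Halpha : forall h k, in_inertia G sigma act h -> in_inertia G sigma act k ->
     (phi h \o phi k)%VF = alpha h k *: phi (h * k)%g)
  (W : vectType R[i]) (psi : gT -> 'End(W))
  (HW : twisted_module (in_inertia G sigma act) alpha psi)
  (HWsimple : twisted_simple (in_inertia G sigma act) psi)
  (Hocc : exists f : 'Hom(W, M),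
     twisted_hom (in_inertia G sigma act) psi phi f /\ lker f = 0%VS)
  (w : W) (Hw : w != 0) :
  simple_invariant_submodule G sigma act
    (mult_space (in_inertia G sigma act) psi phi w).
Proof.
case: HG => Haut Hcomp Hfaith.
set GM := in_inertia G sigma act.
have surj := act_surj Hmod Hsimple.
case: (Hmod) => alin act1 actM; case: (Hsimple) => dM Hs.
pose aL := linfun act.
have aLE : forall a, aL a = act a by apply: linfunE'.
have sigE : forall g, g \in G -> forall a, linfun (sigma g) a = sigma g a.
  by move=> g gG; apply: linfunE'; case: (Haut g gG).
have smul : forall g, g \in G -> forall a b, sigma g (a * b) = sigma g a * sigma g b.
  by move=> g gG; case: (Haut g gG).
have sig1 : forall a, sigma 1%g a = a.
  move=> a; case: (Haut 1%g (group1 G)) => _ _ _ /bij_inj; apply.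
  by rewrite -Hcomp ?group1 // mulg1.
have sigK : forall g, g \in G -> forall a, sigma g (sigma (g^-1)%g a) = a.
  by move=> g gG a; rewrite -Hcomp ?groupV // mulgV sig1.
have sigVK : forall g, g \in G -> forall a, sigma (g^-1)%g (sigma g a) = a.
  by move=> g gG a; rewrite -Hcomp ?groupV // mulVg sig1.
have GMG : forall h, GM h -> h \in G by move=> h [].
have GM1 : GM 1%g.
  split; first exact: group1.
  exists \1%VF; split; first by exists \1%VF; move=> x; rewrite !id_lfunE.
  by move=> a m; rewrite !id_lfunE invg1 sig1.
have GMV : forall h, GM h -> GM (h^-1)%g.
  move=> h [hG [f [fbij fH]]]; split; first by rewrite groupV.
  have kf : lker f == 0%VS by apply/lker0P; apply: bij_inj.
  exists (f^-1)%VF; split.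
    by exists f; [exact: lker0_lfunVK kf | exact: lker0_lfunK kf].
  move=> a m; rewrite invgK; apply: (lker0P kf); rewrite lker0_lfunVK //.
  by have := fH (sigma h a) (f^-1%VF m); rewrite sigVK // lker0_lfunVK // => ->.
have kill : forall g, g \in G -> ~ GM g -> exists j, act j = \1%VF /\ act (sigma g j) = 0.
  move=> g gG nGM.
  have slin : forall k a b, sigma g (k *: a + b) = k *: sigma g a + sigma g b.
    by case: (Haut g gG).
  case: (@kill_lemma _ A M act (sigma g) (sigma (g^-1)%g) Hmod Hsimple slin
     (smul g gG) (sigK g gG) (sigVK g gG)) => //.
  by case=> f [fb fH]; case: nGM; split => //; exists f.
have prod : forall s : seq gT, exists J, act J = \1%VF /\
    forall g, g \in s -> g \in G -> ~ GM g -> act (sigma g J) = 0.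
  elim=> [|x s [J [HJ1 HJ2]]]; first by exists 1; split.
  case: (classic (x \in G /\ ~ GM x)) => [[xG nx]|hx].
    have [j [Hj1 Hj2]] := kill x xG nx.
    exists (J * j); split; first by rewrite actM HJ1 Hj1 comp_lfun1l.
    move=> g; rewrite in_cons => /orP[/eqP->|gs] gG ng.
      by rewrite smul // actM Hj2 comp_lfun0r.
    by rewrite smul // actM HJ2 // comp_lfun0l.
  exists J; split => // g; rewrite in_cons => /orP[/eqP->|gs] gG ng.
    by case: hx.
  exact: HJ2.
split.
- case: Hocc => f0 [h0 k0]; exists (f0 w); split; first by exists f0.
  apply: contra Hw => /eqP h; apply/eqP; apply: (lker0P (introT eqP k0)).
  by rewrite h linear0.
- move=> k x y [f1 [h1 <-]] [f2 [h2 <-]]; exists (k *: f1 + f2); split.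
    move=> h z GMh; rewrite !add_lfunE !scale_lfunE h1 // h2 //.
    by rewrite linearP.
  by rewrite add_lfunE scale_lfunE.
- move=> a x inva [f [hf <-]]; exists (act a \o f)%VF; split; last by rewrite comp_lfunE.
  move=> h z GMh; rewrite !comp_lfunE hf //.
  by rewrite (proj2 (Hphi h GMh)) inva // GMG.
move=> U Usub Ustab.
case: (eqVneq U 0%VS) => [->|U0]; [by left | right].
have uU : vpick U \in U := memv_pick U.
have u0 : vpick U != 0 by rewrite vpick0.
have [f [hf fw]] := Usub _ uU.
have kf : lker f == 0%VS.
  have st : forall h x, GM h -> x \in lker f -> psi h x \in lker f.
    by move=> h x GMh; rewrite !memv_ker hf // => /eqP ->; rewrite linear0.
  case: HWsimple => _ /(_ _ st) [-> //|full].
  have : w \in lker f by rewrite full memvf.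
  by rewrite memv_ker fw (negbTE u0).
move=> m [g [hg <-]].
have [a1 Ha1] := surj (g \o f^-1)%VF.
have [J [HJ1 HJ2]] := prod (enum G).
pose a2 := a1 * J.
pose a := \sum_(x in G) sigma x a2.
have inva : Defs.invariant G sigma a.
  move=> k kG; rewrite /a -sigE // linear_sum /=.
  rewrite [RHS](reindex_inj (mulgI k)) /=.
  apply: eq_big => x; first by rewrite groupMl.
  by move=> xG; rewrite sigE // Hcomp.
have Y0 : forall x, x \in G -> ~ GM x -> (act (sigma x a2) \o f)%VF = 0.
  move=> x xG nGMx.
  by rewrite smul // actM HJ2 ?mem_enum // comp_lfun0r comp_lfun0l.
have Y1 : forall x, GM x -> (act (sigma x a2) \o f)%VF = g.
  move=> x GMx; have xG := GMG x GMx; apply/lfunP => z.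
  have GMx' := GMV _ GMx.
  have hal := Halpha _ _ GMx GMx'.
  rewrite mulgV Hphi1 in hal.
  have al0 : alpha x (x^-1)%g != 0.
    apply/eqP => al; move: hal; rewrite al scale0r => hc.
    have v0 : vpick (fullv : {vspace M}) != 0.
      by rewrite vpick0 -dimv_eq0 -lt0n.
    have : (phi x \o phi (x^-1)%g)%VF (vpick fullv) = 0 by rewrite hc zero_lfunE.
    rewrite comp_lfunE => /eqP; apply/negP.
    have i1 := bij_inj (proj1 (Hphi _ GMx)).
    have i2 := bij_inj (proj1 (Hphi _ GMx')).
    rewrite -(linear0 (phi x)); apply/negP => /eqP/i1.
    rewrite -(linear0 (phi (x^-1)%g)) => /i2 /eqP; exact/negP.
  have hpsi := (proj2 HW) _ _ GMx GMx'.
  rewrite mulgV (proj1 HW) in hpsi.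
  set z' := psi (x^-1)%g ((alpha x (x^-1)%g)^-1 *: z).
  have zz : z = psi x z'.
    by rewrite /z' -comp_lfunE hpsi scale_lfunE id_lfunE scalerA divff // scale1r.
  rewrite comp_lfunE zz hf // -(proj2 (Hphi x GMx)) actM HJ1 comp_lfun1r Ha1.
  by rewrite comp_lfunE (lker0_lfunK kf) (hg _ _ GMx).
have [N HN] : exists N : nat, (act a \o f)%VF = N.+1%:R *: g.
  have -> : (act a \o f)%VF = \sum_(x in G) (act (sigma x a2) \o f)%VF.
    apply/lfunP => z; rewrite comp_lfunE /a -aLE linear_sum !sum_lfunE.
    by apply: eq_bigr => x _; rewrite comp_lfunE; congr (fun_of_lfun _ _); apply: aLE.
  rewrite (bigD1 1%g) ?group1 //= Y1 //.
  have [N HN] : exists N : nat,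
      \sum_(x in G | x != 1%g) (act (sigma x a2) \o f)%VF = N%:R *: g.
    apply: (big_ind (fun s => exists N : nat, s = N%:R *: g)).
    - by exists 0%N; rewrite scale0r.
    - by move=> s1 s2 [N1 ->] [N2 ->]; exists (N1 + N2)%N; rewrite natrD scalerDl.
    - move=> x /andP[xG _]; case: (classic (GM x)) => [GMx|nGMx].
        by exists 1%N; rewrite Y1 // scale1r.
      by exists 0%N; rewrite Y0 // scale0r.
  by exists N; rewrite HN -natr1 scalerDl scale1r addrC.
have cN0 : (N.+1%:R : R[i]) != 0 by rewrite Num.Theory.pnatr_eq0.
have : act a (f w) = N.+1%:R *: g w by rewrite -comp_lfunE HN scale_lfunE.
rewrite fw => h.
have -> : g w = (N.+1%:R)^-1 *: act a (vpick U) by rewrite h scalerA mulVf // scale1r.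
by rewrite memvZ // Ustab.
Qed.
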